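(* For an even integer $n\ge4$ and any integer $1\le k\le\frac{n-2}{2}$, $$\sum_{1\le i\le n/2}e_{2i}\,g_{n-2i,n}\prod_{j=k-i+1}^{\frac{n-2i}{2}}\frac{q^{2j}-1}{q^{2j-2k+2i}-1}=\frac{q^{(n-1)k}-1}{q-1}\prod_{j=k+1}^{n/2}\frac{q^{2j}-1}{q^{2j-2k}-1}.$$
   Context: $e_{2i}$ is the $E$-polynomial (in $q=uv$) of the variety of nondegenerate skew forms on $\mathbb C^{2i}$ up to scaling, i.e. of ${\mathrm{Pf}}^{\circ}(2i,\mathbb C^{2i})=\mathbb P(\wedge^2(\mathbb C^{2i})^{\vee})\setminus\{\text{degenerate forms}\}$. $g_{a,b}=\binom{b}{a}_q=\prod_{j=0}^{a-1}\frac{1-q^{b-j}}{1-q^{j+1}}$ is the $E$-polynomial of the Grassmannian $G(a,b)$. *)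

(* Defs.v *)
From HB Require Import structures.
From mathcomp Require Import all_boot all_order all_algebra fraction.
Set Implicit Arguments. Unset Strict Implicit. Unset Printing Implicit Defensive.
Import Order.TTheory GRing.Theory Num.Theory.
Local Open Scope ring_scope.

Definition Qq := {fraction {poly rat}}.
Definition qvar : Qq := @FracField.tofrac {poly rat} 'X.

Section Defs.
Variable F : fieldType.

Definition irange (lo hi : int) : seq int :=
  if (hi < lo)%R then [::]
  else [seq lo + (m%:Z) | m <- iota 0 (absz (hi - lo + 1))].

(* e_{2i}: E-polynomial of Pf°(2i, C^{2i}) = nondegenerate skew forms on
   C^{2i} up to scaling; it is polynomial-count with count
   |GL_{2i}(q)| / (|Sp_{2i}(q)| (q-1)) = q^{i(i-1)} prod_{j=1}^i (q^{2j-1}-1) / (q-1). *)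
Definition e_skew (q : F) (i : nat) : F :=
  q ^+ (i * (i - 1)) * (\prod_(1 <= j < i.+1) (q ^+ (2 * j - 1) - 1)) / (q - 1).

(* g_{a,b} = Gaussian binomial [b choose a]_q *)
Definition gq (q : F) (a b : nat) : F :=
  \prod_(0 <= j < a) ((1 - q ^+ (b - j)) / (1 - q ^+ j.+1)).
End Defs.

(* Main.v *)
Require Import Defs.
From HB Require Import structures.
From mathcomp Require Import all_boot all_order all_algebra fraction.
From mathcomp Require Import zify ring lra.
Import Order.TTheory GRing.Theory Num.Theory.
Local Open Scope ring_scope.
Set Implicit Arguments. Unset Strict Implicit.

Definition Bq (F : fieldType) (q : F) (r : nat) := \prod_(1 <= t < r.+1) (q ^+ t - 1).
Definition Aq (F : fieldType) (q : F) (r : nat) := \prod_(1 <= t < r.+1) (q ^+ (2 * t) - 1).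
Definition Oq (F : fieldType) (q : F) (r : nat) := \prod_(1 <= t < r.+1) (q ^+ (2 * t - 1) - 1).
Definition Pq (F : fieldType) (q x : F) (i : nat) := \prod_(0 <= j < i) (x - q ^+ (2 * j)).
Fixpoint qbin (F : fieldType) (q : F) (k i : nat) : F :=
  match k, i with
  | 0, 0 => 1
  | 0, _.+1 => 0
  | k'.+1, 0 => 1
  | k'.+1, i'.+1 => qbin q k' i' + q ^+ (2 * i'.+1) * qbin q k' i'.+1
  end.

Lemma BqS (F : fieldType) (q : F) r : Bq q r.+1 = Bq q r * (q ^+ r.+1 - 1).
Proof. by rewrite /Bq big_nat_recr. Qed.
Lemma AqS (F : fieldType) (q : F) r : Aq q r.+1 = Aq q r * (q ^+ (2 * r.+1) - 1).
Proof. by rewrite /Aq big_nat_recr. Qed.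
Lemma OqS (F : fieldType) (q : F) r : Oq q r.+1 = Oq q r * (q ^+ (2 * r.+1 - 1) - 1).
Proof. by rewrite /Oq big_nat_recr. Qed.
Lemma PqS (F : fieldType) (q x : F) i : Pq q x i.+1 = Pq q x i * (x - q ^+ (2 * i)).
Proof. by rewrite /Pq big_nat_recr. Qed.
Lemma Bq0 (F : fieldType) (q : F) : Bq q 0 = 1. Proof. by rewrite /Bq big_geq. Qed.
Lemma Aq0 (F : fieldType) (q : F) : Aq q 0 = 1. Proof. by rewrite /Aq big_geq. Qed.
Lemma Oq0 (F : fieldType) (q : F) : Oq q 0 = 1. Proof. by rewrite /Oq big_geq. Qed.
Lemma Pq0 (F : fieldType) (q x : F) : Pq q x 0 = 1. Proof. by rewrite /Pq big_geq. Qed.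

Definition goodq (F : fieldType) (q : F) := forall a, (0 < a)%N -> q ^+ a - 1 != 0.

Lemma Bq_neq0 (F : fieldType) (q : F) r : goodq q -> Bq q r != 0.
Proof. move=> h; elim: r => [|r IH]; first by rewrite Bq0 oner_neq0.
by rewrite BqS mulf_neq0 ?h. Qed.
Lemma Aq_neq0 (F : fieldType) (q : F) r : goodq q -> Aq q r != 0.
Proof. move=> h; elim: r => [|r IH]; first by rewrite Aq0 oner_neq0.
by rewrite AqS mulf_neq0 ?h //; lia. Qed.
Lemma Oq_neq0 (F : fieldType) (q : F) r : goodq q -> Oq q r != 0.
Proof. move=> h; elim: r => [|r IH]; first by rewrite Oq0 oner_neq0.
by rewrite OqS mulf_neq0 ?h //; lia. Qed.

Lemma qbin_gt (F : fieldType) (q : F) k i : (k < i)%N -> qbin q k i = 0.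
Proof.
elim: k i => [|k IH] [|i] //= H.
by rewrite !IH ?mulr0 ?addr0 //; lia.
Qed.
Lemma qbin_0 (F : fieldType) (q : F) k : qbin q k 0 = 1.
Proof. by case: k. Qed.

Lemma qbin_sum (F : fieldType) (q x : F) k :
  x ^+ k = \sum_(i < k.+1) qbin q k i * Pq q x i.
Proof.
elim: k => [|k IH]; first by rewrite big_ord_recl big_ord0 /= Pq0 addr0 mulr1 expr0.
rewrite exprS IH mulr_sumr.
have H : forall i : 'I_k.+1, x * (qbin q k i * Pq q x i) =
   qbin q k i * Pq q x i.+1 + q ^+ (2 * i) * qbin q k i * Pq q x i.
  by move=> i; rewrite PqS; ring.
rewrite (eq_bigr _ (fun i _ => H i)) big_split /=.
rewrite [in RHS]big_ord_recl /= Pq0 mulr1.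
under [in RHS]eq_bigr do rewrite /bump /= ?add1n ?add0n mulrDl.
rewrite [in RHS]big_split /= addrCA; congr (_ + _).
rewrite [in RHS]big_ord_recr /= qbin_gt // mulr0 mul0r addr0.
rewrite big_ord_recl /= qbin_0 Pq0 muln0 expr0 !mulr1; congr (_ + _).
Qed.

Lemma qbin_closed (F : fieldType) (q : F) k i : (i <= k)%N ->
  qbin q k i * (Aq q i * Aq q (k - i)) = Aq q k.
Proof.
elim: k i => [|k IH] [|i] //= Hi.
- by rewrite Aq0 !mul1r.
- by rewrite Aq0 subn0 !mul1r.
- rewrite subSS AqS.
  have [lt_ik | eq_ik] : (i < k)%N \/ i = k by lia.
  + have e1 := IH i (ltnW lt_ik).
    have e2 := IH i.+1 lt_ik.
    have hs : (k - i)%N = (k - i.+1).+1 by lia.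
    rewrite AqS in e2.
    rewrite hs AqS -hs.
    set a := q ^+ (2 * i.+1); set b := q ^+ (2 * (k - i)).
    have ab : a * b = q ^+ (2 * k.+1) by rewrite /a /b -exprD; congr (_ ^+ _); lia.
    transitivity ((qbin q k i * (Aq q i * Aq q (k - i))) * (a - 1) +
      a * (qbin q k i.+1 * (Aq q i * (a - 1) * Aq q (k - i.+1))) * (b - 1)).
      by rewrite hs AqS -hs /a /b; ring.
    by rewrite e1 e2 AqS -ab /a /b; ring.
  + subst i; rewrite (qbin_gt q (ltnSn k)) mulr0 addr0 subnn Aq0.
    have := IH k (leqnn k); rewrite subnn Aq0 => e1.
    transitivity ((qbin q k k * (Aq q k * 1)) * (q ^+ (2 * k.+1) - 1)); first by ring.
    by rewrite e1 AqS.
Qed.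

Lemma Bq_prod (F : fieldType) (q : F) a b : (a <= b)%N ->
  \prod_(j < a) (q ^+ (b - j) - 1) * Bq q (b - a) = Bq q b.
Proof.
elim: a => [|a IH] Hab; first by rewrite big_ord0 mul1r subn0.
rewrite big_ord_recr /= -IH; last by lia.
have hs : (b - a)%N = (b - a.+1).+1 by lia.
by rewrite hs BqS -hs; ring.
Qed.

Lemma Bq_ord (F : fieldType) (q : F) a : Bq q a = \prod_(j < a) (q ^+ j.+1 - 1).
Proof. by rewrite /Bq big_add1 /= big_mkord. Qed.

Lemma gq_eq (F : fieldType) (q : F) a b : goodq q -> (a <= b)%N ->
  gq q a b = Bq q b / (Bq q a * Bq q (b - a)).
Proof.
move=> hq hab.
have e : gq q a b = \prod_(j < a) (q ^+ (b - j) - 1) / Bq q a.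
  rewrite /gq big_mkord Bq_ord -prodf_div; apply: eq_bigr => j _.
  by rewrite -opprB -[1 - q ^+ j.+1]opprB invrN mulrNN.
rewrite e -(Bq_prod q hab).
by field; rewrite ?Bq_neq0.
Qed.

Lemma Bq2 (F : fieldType) (q : F) r : Bq q (2 * r) = Aq q r * Oq q r.
Proof.
elim: r => [|r IH]; first by rewrite muln0 Bq0 Aq0 Oq0 mulr1.
have -> : (2 * r.+1 = (2 * r).+1.+1)%N by lia.
rewrite !BqS IH AqS OqS.
have -> : (2 * r.+1 - 1 = (2 * r).+1)%N by lia.
have -> : (2 * r.+1 = (2 * r).+1.+1)%N by lia.
ring.
Qed.

Lemma Aq_shift (F : fieldType) (q : F) a s :
  Aq q (a + s) = \prod_(t < s) (q ^+ (2 * (a + 1 + t)) - 1) * Aq q a.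
Proof.
elim: s => [|s IH]; first by rewrite big_ord0 mul1r addn0.
rewrite addnS AqS IH big_ord_recr /=.
have -> : (a + 1 + s = (a + s).+1)%N by lia.
ring.
Qed.

Lemma Pq_Oq (F : fieldType) (q : F) m i : (i <= m)%N ->
  Pq q (q ^+ (2 * m - 1)) i * Oq q (m - i) = q ^+ (i * (i - 1)) * Oq q m.
Proof.
elim: i => [|i IH] H; first by rewrite Pq0 subn0 mul1r.
rewrite PqS.
have hs : (m - i)%N = (m - i.+1).+1 by lia.
have e1 : q ^+ (2 * m - 1) = q ^+ (2 * i) * q ^+ (2 * (m - i) - 1).
  by rewrite -exprD; congr (_ ^+ _); lia.
have e2 : q ^+ (i.+1 * (i.+1 - 1)) = q ^+ (i * (i - 1)) * q ^+ (2 * i).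
  by rewrite -exprD; congr (_ ^+ _); rewrite subSS subn0 -[i]/(i.+1.-1) subn1 /=; nia.
transitivity (q ^+ (2 * i) * (Pq q (q ^+ (2 * m - 1)) i * Oq q (m - i))).
  by rewrite hs OqS -hs e1; ring.
by rewrite IH ?e2; [ring | lia].
Qed.
Lemma main_gen (F : fieldType) (q : F) (hq : goodq q) (n k : nat) :
  ~~ odd n -> (4 <= n)%N -> (1 <= k)%N -> (2 * k <= n - 2)%N ->
  \sum_(1 <= i < (n./2).+1)
     (e_skew q i * gq q (n - 2 * i) n *
      \prod_(j <- irange (k%:Z - i%:Z + 1) (n./2 - i)%N%:Z)
         ((exprz q (2 * j) - 1) / (exprz q (2 * j - 2 * k%:Z + 2 * i%:Z) - 1)))
  = (q ^+ ((n - 1) * k) - 1) / (q - 1) *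
    \prod_(k.+1 <= j < (n./2).+1)
       ((q ^+ (2 * j) - 1) / (q ^+ (2 * j - 2 * k) - 1)).
Proof.
move=> hev h4 hk1 hk2.
have [m hn] : exists m, n = (2 * m)%N.
  by exists n./2; rewrite -[n in LHS]odd_double_half (negbTE hev) add0n mul2n.
subst n.
have -> : (2 * m)./2 = m by rewrite mul2n doubleK.
have hkm : (k < m)%N by lia.
have hq1 : q - 1 != 0 by have := hq 1%N isT; rewrite expr1.
have hA := Aq_neq0 _ hq; have hO := Oq_neq0 _ hq.
set x := q ^+ (2 * m - 1).
set C := Aq q m / ((q - 1) * Aq q k * Aq q (m - k)).
have N2 : \prod_(t < m - k) (q ^+ (2 * (0 + 1 + t)) - 1) = Aq q (m - k).
  by have := Aq_shift q 0 (m - k); rewrite add0n Aq0 mulr1 => ->.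
have E : forall n : nat, exprz q (Posz n) = q ^+ n by [].
have -> : (q ^+ ((2 * m - 1) * k) - 1) / (q - 1) *
    \prod_(k.+1 <= j < m.+1) ((q ^+ (2 * j) - 1) / (q ^+ (2 * j - 2 * k) - 1))
    = C * (x ^+ k - 1).
  rewrite -{1}(add0n k.+1) big_addn subSS big_mkord.
  rewrite (eq_bigr (fun t : 'I_(m - k) => (q ^+ (2 * (k + 1 + t)) - 1) /
                                         (q ^+ (2 * (0 + 1 + t)) - 1))); last first.
    by move=> t _; congr ((_ ^+ _ - 1) / (_ ^+ _ - 1)); lia.
  rewrite prodf_div N2.
  have -> : \prod_(t < m - k) (q ^+ (2 * (k + 1 + t)) - 1) = Aq q m / Aq q k.
    by have := Aq_shift q k (m - k); rewrite subnKC ?(ltnW hkm) // => ->; rewrite mulfK.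
  rewrite /x -exprM /C; field.
  by rewrite !hA hq1.
rewrite (@big_cat_nat _ _ _ k.+1) //=; [| lia].
rewrite [X in _ + X]big1_seq ?addr0; last first.
  move=> i /andP[_]; rewrite mem_index_iota => /andP[hi1 hi2].
  rewrite /irange.
  have -> : ((m - i)%N%:Z < k%:Z - i%:Z + 1) = false by apply/negP => /=; lia.
  have -> : absz ((m - i)%N%:Z - (k%:Z - i%:Z + 1) + 1) = (m - k)%N by lia.
  rewrite big_map.
  have /eqP -> : \prod_(j <- iota 0 (m - k))
      ((exprz q (2 * (k%:Z - i%:Z + 1 + j%:Z)) - 1) /
       (exprz q (2 * (k%:Z - i%:Z + 1 + j%:Z) - 2 * k%:Z + 2 * i%:Z) - 1)) == 0.
    rewrite prodf_seq_eq0; apply/hasP; exists (i - k - 1)%N.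
      by rewrite mem_iota; lia.
    have -> : k%:Z - i%:Z + 1 + (i - k - 1)%N%:Z = 0 by lia.
    by rewrite mulr0 expr0z subrr mul0r eqxx.
  by rewrite mulr0.
rewrite (eq_big_nat _ _ (F2 := fun i => C * (qbin q k i * Pq q x i))); last first.
  move=> i /andP[hi1 hi2].
  have hik : (i <= k)%N by lia.
  rewrite /irange.
  have -> : ((m - i)%N%:Z < k%:Z - i%:Z + 1) = false by apply/negP => /=; lia.
  have -> : absz ((m - i)%N%:Z - (k%:Z - i%:Z + 1) + 1) = (m - k)%N by lia.
  rewrite big_map.
  have -> : iota 0 (m - k) = index_iota 0 (m - k) by rewrite /index_iota subn0.
  rewrite big_mkord.
  rewrite (eq_bigr (fun t : 'I_(m - k) => (q ^+ (2 * ((k - i) + 1 + t)) - 1) /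
                                         (q ^+ (2 * (0 + 1 + t)) - 1))); last first.
    move=> t _.
    have -> : 2 * (k%:Z - i%:Z + 1 + (nat_of_ord t)%:Z) = (2 * ((k - i) + 1 + t))%N%:Z by lia.
    have -> : (2 * ((k - i) + 1 + t))%N%:Z - 2 * k%:Z + 2 * i%:Z = (2 * (0 + 1 + t))%N%:Z by lia.
    by rewrite !E.
  rewrite prodf_div N2.
  have -> : \prod_(t < m - k) (q ^+ (2 * ((k - i) + 1 + t)) - 1) = Aq q (m - i) / Aq q (k - i).
    have := Aq_shift q (k - i) (m - k).
    have -> : ((k - i) + (m - k) = m - i)%N by lia.
    by move=> ->; rewrite mulfK.
  have -> : e_skew q i = q ^+ (i * (i - 1)) * Oq q i / (q - 1) by [].
  rewrite gq_eq //; last by lia.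
  have -> : (2 * m - (2 * m - 2 * i) = 2 * i)%N by lia.
  have -> : (2 * m - 2 * i = 2 * (m - i))%N by lia.
  rewrite !Bq2.
  have -> : qbin q k i = Aq q k / (Aq q i * Aq q (k - i)).
    by rewrite -(qbin_closed q hik) mulfK // mulf_neq0.
  have -> : Pq q x i = q ^+ (i * (i - 1)) * Oq q m / Oq q (m - i).
    by rewrite -(Pq_Oq q (ltnW (leq_ltn_trans hik hkm))) mulfK.
  rewrite /C; field.
  by rewrite !hA !hO hq1.
rewrite -mulr_sumr; congr (_ * _).
rewrite (qbin_sum q x k) big_ord_recl qbin_0 Pq0 mulr1 addrAC subrr add0r.
rewrite big_add1 /= big_mkord; apply: eq_bigr => i _.
by rewrite /bump /= add1n.
Qed.

Lemma qvar_good : goodq qvar.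
Proof.
move=> a ha; rewrite /qvar -tofracXn -tofrac1 -tofracB tofrac_eq0.
by rewrite -size_poly_eq0 -polyC1 size_XnsubC.
Qed.

Unset Implicit Arguments.

Theorem mainTheorem5 (n k : nat) :
  ~~ odd n -> (4 <= n)%N -> (1 <= k)%N -> (2 * k <= n - 2)%N ->
  let q := qvar in
  \sum_(1 <= i < (n./2).+1)
     (e_skew q i * gq q (n - 2 * i) n *
      \prod_(j <- irange (k%:Z - i%:Z + 1) (n./2 - i)%N%:Z)
         ((exprz q (2 * j) - 1) / (exprz q (2 * j - 2 * k%:Z + 2 * i%:Z) - 1)))
  = (q ^+ ((n - 1) * k) - 1) / (q - 1) *
    \prod_(k.+1 <= j < (n./2).+1)
       ((q ^+ (2 * j) - 1) / (q ^+ (2 * j - 2 * k) - 1)).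
Proof.
move=> h1 h2 h3 h4 q.
exact: (main_gen qvar_good h1 h2 h3 h4).
Qed.
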